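(* Let $b,c\in Z^{10}$ with $\sum_i b_i=\sum_i c_i=0$. Let $j\in\{1,3,5,7,9\}$ and let $i_1,i_2,i_3,i_4$ be the remaining four odd indices listed in cyclic order (with $i_5:=i_1$). Assume $t\mid B_j$, $t\mid C_j$, $t\nmid B_{i_l}$, $t\nmid C_{i_l}$ for $l=1,\dots,4$, and $t\nmid B_{i_l}+B_{i_{l+1}}$, $t\nmid C_{i_l}+C_{i_{l+1}}$ for $l=1,2,3,4$. Then $\mathbb{M}(b)\cong\mathbb{M}(c)$ as $B_{5,10}$-modules if and only if $$t\mid B_{i_1}C_{i_2}B_{i_3}C_{i_4}-C_{i_1}B_{i_2}C_{i_3}B_{i_4}.$$
   Context: Let $Z=\mathbb{C}[[t]]$. Let $\Gamma_{10}$ be the quiver with vertices $0,1,\dots,9$ (indices taken mod $10$) on a cycle and arrows $x_i\colon i-1\to i$, $y_i\colon i\to i-1$ for $i=1,\dots,10$. Let $B_{5,10}$ be the completed path algebra of $\Gamma_{10}$ modulo the closed ideal generated by $xy=yx$ and $x^5=y^5$ at every vertex. For $b=(b_1,\dots,b_{10})\in Z^{10}$ with $\sum_i b_i=0$, the $B_{5,10}$-module $\mathbb{M}(b)$ has $V_i=Z\oplus Z$ at every vertex, and for odd $j$: $x_j=\begin{pmatrix} t& b_j\\ 0&1\end{pmatrix}$, $y_j=\begin{pmatrix} 1&-b_j\\0&t\end{pmatrix}$; for even $j$: $x_j=\begin{pmatrix}1&b_j\\0&t\end{pmatrix}$, $y_j=\begin{pmatrix}t&-b_j\\0&1\end{pmatrix}$.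 An isomorphism $\mathbb{M}(b)\to\mathbb{M}(c)$ is a family of invertible $Z$-linear maps $\varphi_i\colon Z^2\to Z^2$ commuting with all $x_i$ and $y_i$. For odd $i$ write $B_i=b_i+b_{i+1}$ and $C_i=c_i+c_{i+1}$ (indices mod $10$). *)

(* Defs.v *)
From HB Require Import structures.
From mathcomp Require Import all_boot all_algebra.
From mathcomp Require Import boolp reals Rstruct complex.
From mathcomp Require Import zify.
From Stdlib Require Import Lia.

Set Implicit Arguments.
Unset Strict Implicit.
Unset Printing Implicit Defensive.

Import GRing.Theory.
Local Open Scope ring_scope.

Section PowerSeries.
Variable K : comNzRingType.

Record ps := PS { coef : nat -> K }.

HB.instance Definition _ := gen_eqMixin ps.
HB.instance Definition _ := gen_choiceMixin ps.

Lemma ps_ext (p q : ps) : (forall n, coef p n = coef q n) -> p = q.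
Proof. by case: p; case: q => f g /= e; congr PS; apply: funext. Qed.

Definition ps0 := PS (fun _ => 0).
Definition psopp (p : ps) := PS (fun n => - coef p n).
Definition psadd (p q : ps) := PS (fun n => coef p n + coef q n).
Definition ps1 := PS (fun n => (n == 0%N)%:R).
Definition psmul (p q : ps) :=
  PS (fun n => \sum_(0 <= i < n.+1) coef p i * coef q (n - i)).

Lemma psaddA : associative psadd.
Proof. by move=> p q r; apply: ps_ext => n /=; rewrite addrA. Qed.
Lemma psaddC : commutative psadd.
Proof. by move=> p q; apply: ps_ext => n /=; rewrite addrC. Qed.
Lemma psadd0 : left_id ps0 psadd.
Proof. by move=> p; apply: ps_ext => n /=; rewrite add0r. Qed.
Lemma psaddN : left_inverse ps0 psopp psadd.
Proof. by move=> p; apply: ps_ext => n /=; rewrite addNr. Qed.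

HB.instance Definition _ := GRing.isZmodule.Build ps psaddA psaddC psadd0 psaddN.

Lemma psmulC : commutative psmul.
Proof.
move=> p q; apply: ps_ext => n /=.
rewrite big_nat_rev /=; apply: eq_big_nat => i /andP[_ lin].
rewrite add0n subSS mulrC; congr (_ * _); congr (coef _ _).
by rewrite subKn // -ltnS.
Qed.

Lemma psmul1 : left_id ps1 psmul.
Proof.
move=> p; apply: ps_ext => n /=.
rewrite big_nat_recl // /= mul1r subn0 big1_seq ?addr0 // => i _.
by rewrite mul0r.
Qed.

Lemma psmulDl : left_distributive psmul psadd.
Proof.
move=> p q r; apply: ps_ext => n /=.
by rewrite -big_split /=; apply: eq_bigr => i _; rewrite mulrDl.
Qed.

Lemma psmulA : associative psmul.
Proof.
move=> p q r; apply: ps_ext => n; rewrite /psmul /=; symmetry.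
pose F i k := coef p i * coef q (k - i) * coef r (n - k).
transitivity (\sum_(0 <= i < n.+1) \sum_(0 <= k < n.+1) (if (i <= k)%N then F i k else 0)).
  rewrite [RHS]exchange_big_nat /=.
  apply: eq_big_nat => k /andP[_ lkn]; rewrite mulr_suml.
  rewrite [RHS](big_cat_nat (n := k.+1)) //= [X in _ = _ + X]big1_seq ?addr0; last first.
    move=> i; rewrite mem_index_iota => /and3P[_ ki _].
    by rewrite leqNgt ki.
  by apply: eq_big_nat => i /andP[_]; rewrite ltnS => ->.
apply: eq_big_nat => i /andP[_ lin].
rewrite (big_cat_nat (n := i)) //=; last exact: ltnW.
rewrite big1_seq ?add0r; last first.
  by move=> k /andP[_]; rewrite mem_index_iota => H; rewrite ifF //; apply/negbTE; rewrite -ltnNge; case/andP: H.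
rewrite -{1}(add0n i) big_addn mulr_sumr.
have -> : (n.+1 - i = (n - i).+1)%N by lia.
apply: eq_big_nat => j /andP[_ jn].
rewrite leq_addl /F -mulrA addnK; congr (_ * (_ * coef r _)).
by lia.
Qed.

Lemma ps1_neq0 : ps1 != ps0.
Proof.
apply/negP => /eqP /(congr1 (fun p => coef p 0)) /=.
by move/eqP; rewrite oner_eq0.
Qed.

HB.instance Definition _ :=
  GRing.Zmodule_isComNzRing.Build ps psmulA psmulC psmul1 psmulDl ps1_neq0.

Definition ps_t : ps := PS (fun n => (n == 1%N)%:R).

End PowerSeries.

Definition CC : fieldType := Rdefinitions.R[i].
Definition Z : comNzRingType := ps CC.
Definition t : Z := ps_t CC.

Definition Zdvd (a f : Z) : Prop := exists g : Z, f = a * g.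

(* The modules M(b).  Indices 1..10 of the paper are read mod 10 and   *)
(* represented in 'I_10 (paper index 10 <-> 0).  Vertex k : 'I_10;     *)
(* arrow x_j : V_(j-1) -> V_j, y_j : V_j -> V_(j-1).  Z-linear maps    *)
(* Z^2 -> Z^2 are 2x2 matrices acting on column vectors.               *)
Definition prev10 (j : 'I_10) : 'I_10 := inord ((j + 9) %% 10).
Definition next10 (j : 'I_10) : 'I_10 := inord ((j + 1) %% 10).

Definition mx2 (a b c d : Z) : 'M[Z]_2 :=
  \matrix_(r < 2, s < 2)
    (if r == 0 :> nat then (if s == 0 :> nat then a else b)
     else (if s == 0 :> nat then c else d)).

Definition xmat (b : 'I_10 -> Z) (j : 'I_10) : 'M[Z]_2 :=
  if odd j then mx2 t (b j) 0 1 else mx2 1 (b j) 0 t.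
Definition ymat (b : 'I_10 -> Z) (j : 'I_10) : 'M[Z]_2 :=
  if odd j then mx2 1 (- b j) 0 t else mx2 t (- b j) 0 1.

Definition Miso (b c : 'I_10 -> Z) : Prop :=
  exists phi : 'I_10 -> 'M[Z]_2,
    (forall k, exists psi : 'M[Z]_2, phi k *m psi = 1%:M /\ psi *m phi k = 1%:M)
    /\ (forall j, phi j *m xmat b j = xmat c j *m phi (prev10 j))
    /\ (forall j, phi (prev10 j) *m ymat b j = ymat c j *m phi j).

Definition Bsum (b : 'I_10 -> Z) (i : 'I_10) : Z := b i + b (next10 i).

Definition oidx (j : 'I_10) (l : nat) : 'I_10 := inord ((j + 2 * l) %% 10).

(* Main.v *)
Require Import Defs.
From HB Require Import structures.
From mathcomp Require Import all_boot all_algebra.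
From mathcomp Require Import zify ring.
Import GRing.Theory.
Local Open Scope ring_scope.

Definition ev0 (f : Z) : CC := coef f 0.
Lemma ev0D (f g : Z) : ev0 (f + g) = ev0 f + ev0 g. Proof. by []. Qed.
Lemma ev0N (f : Z) : ev0 (- f) = - ev0 f. Proof. by []. Qed.
Lemma ev0M (f g : Z) : ev0 (f * g) = ev0 f * ev0 g.
Proof. by rewrite /ev0 /= big_mkord big_ord_recl big_ord0 addr0. Qed.
Lemma ev0B (f g : Z) : ev0 (f - g) = ev0 f - ev0 g. Proof. by []. Qed.
Lemma ev00 : ev0 0 = 0. Proof. by []. Qed.

Lemma coef_tmulS (g : Z) n : coef (t * g) n.+1 = coef g n.
Proof.
have -> : coef (t*g) n.+1 = \sum_(0 <= i < n.+2) coef t i * coef g (n.+1 - i) by [].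
rewrite big_mkord !big_ord_recl big1 => [|i _]; last by rewrite /t /= mul0r.
have ht0 : coef t 0 = 0 by rewrite /t /= mulr0n.
have ht1 : coef t 1 = 1 by rewrite /t /= mulr1n.
rewrite ht0 ht1 mul0r add0r mul1r addr0 subn1.
reflexivity.
Qed.


Lemma coef_tmul0 (g : Z) : coef (t * g) 0 = 0.
Proof.
have -> : coef (t*g) 0 = \sum_(0 <= i < 1) coef t i * coef g (0 - i) by [].
have ht0 : coef t 0 = 0 by rewrite /t /= mulr0n.
rewrite big_mkord big_ord_recl big_ord0 ht0 mul0r addr0.
reflexivity.
Qed.

Definition divt (f : Z) : Z := PS (fun n => coef f n.+1).

Lemma divtK (f : Z) : ev0 f = 0 -> t * divt f = f.
Proof.
move=> h; apply: ps_ext => -[|n]; first by rewrite coef_tmul0 -h.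
by rewrite coef_tmulS.
Qed.

Lemma Zdvd_ev0 (f : Z) : Zdvd t f <-> ev0 f = 0.
Proof.
split; first by move=> [g ->]; rewrite /ev0 coef_tmul0.
by move=> h; exists (divt f); rewrite divtK.
Qed.

Lemma t_inj (f g : Z) : t * f = t * g -> f = g.
Proof. by move=> h; apply: ps_ext => n; rewrite -(coef_tmulS f) -(coef_tmulS g) h. Qed.

Lemma divtD (f g : Z) : divt (f + g) = divt f + divt g.
Proof. by apply: ps_ext => n; reflexivity. Qed.
Lemma divt0 : divt 0 = 0.
Proof. by apply: ps_ext => n; reflexivity. Qed.

Definition cst (x : CC) : Z := PS (fun n => if n == 0%N then x else 0).
Lemma ev0_cst x : ev0 (cst x) = x. Proof. by []. Qed.
Lemma cst_mul x y : cst x * cst y = cst (x * y).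
Proof.
apply: ps_ext => n.
have -> : coef (cst x * cst y) n = \sum_(0 <= i < n.+1) coef (cst x) i * coef (cst y) (n - i) by [].
rewrite big_mkord big_ord_recl big1 => [|i _]; last by rewrite /= mul0r.
rewrite /= subn0 addr0; case: n => [|n] /=; last by rewrite mulr0.
reflexivity.
Qed.
Lemma cst1 : cst 1 = 1.
Proof. apply: ps_ext => -[|n] /=. reflexivity. by rewrite mulr0n. Qed.

Lemma mx2E (a b c d : Z) (i j : 'I_2) :
  mx2 a b c d i j = if i == 0 :> nat then (if j == 0 :> nat then a else b)
                    else (if j == 0 :> nat then c else d).
Proof. by rewrite mxE. Qed.

Lemma mx2_mul (a b c d a' b' c' d' : Z) :
  mx2 a b c d *m mx2 a' b' c' d' =
  mx2 (a * a' + b * c') (a * b' + b * d') (c * a' + d * c') (c * b' + d * d').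
Proof.
apply/matrixP => i j; rewrite !mxE big_ord_recl big_ord_recl big_ord0 !mx2E /=.
by case: i => [[|[|i]] Hi] //; case: j => [[|[|j]] Hj] //=; rewrite addr0.
Qed.

Lemma mx2_eta (M : 'M[Z]_2) : M = mx2 (M 0 0) (M 0 1) (M 1 0) (M 1 1).
Proof.
apply/matrixP => i j; rewrite mx2E.
by case: i => [[|[|i]] Hi] //; case: j => [[|[|j]] Hj] //=; congr (M _ _); apply: val_inj.
Qed.

Lemma mx2_inj (a b c d a' b' c' d' : Z) :
  mx2 a b c d = mx2 a' b' c' d' -> [/\ a = a', b = b', c = c' & d = d'].
Proof.
move=> h.
have e i j : mx2 a b c d i j = mx2 a' b' c' d' i j by rewrite h.
by move: (e 0 0) (e 0 1) (e 1 0) (e 1 1); rewrite !mx2E /=.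
Qed.

Lemma mx2_1 : (1%:M : 'M[Z]_2) = mx2 1 0 0 1.
Proof.
apply/matrixP => i j; rewrite mx2E !mxE.
by case: i => [[|[|i]] Hi] //; case: j => [[|[|j]] Hj].
Qed.

Lemma eqr_from {x y u v : Z} : u = v -> x - y = u - v -> x = y.
Proof. by move=> -> /eqP; rewrite subrr subr_eq0 => /eqP. Qed.
Lemma eqr_fromN {x y u v : Z} : u = v -> x - y = v - u -> x = y.
Proof. by move=> -> /eqP; rewrite subrr subr_eq0 => /eqP. Qed.
Ltac from e := first [ refine (eqr_from e _); ring | refine (eqr_fromN e _); ring ].

Lemma fwd_step (P0 P1 P2 : 'M[Z]_2) (b1 b2 c1 c2 : Z) :
  P1 *m mx2 t b1 0 1 = mx2 t c1 0 1 *m P0 ->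
  P2 *m mx2 1 b2 0 t = mx2 1 c2 0 t *m P1 ->
  [/\ P0 1 0 = t * P1 1 0, P2 1 0 = t * P1 1 0,
      P2 0 0 = P0 0 0 + (c1 + c2) * P1 1 0,
      P2 1 1 = P0 1 1 - (b1 + b2) * P1 1 0
    & t * (P2 0 1 - P0 0 1) =
      (c1 + c2) * P0 1 1 - (b1 + b2) * P0 0 0 - (b1 + b2) * (c1 + c2) * P1 1 0].
Proof.
rewrite (mx2_eta P0) (mx2_eta P1) (mx2_eta P2) !mx2E /= !mx2_mul.
move: (P0 0 0) (P0 0 1) (P0 1 0) (P0 1 1) => p q r s.
move: (P1 0 0) (P1 0 1) (P1 1 0) (P1 1 1) => a be ga d.
move: (P2 0 0) (P2 0 1) (P2 1 0) (P2 1 1) => p' q' r' s'.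
move=> /mx2_inj [e1 e2 e3 e4] /mx2_inj [f1 f2 f3 f4].
have hr : r = t * ga by from e3.
have ha : a = p + c1 * ga.
  by apply: t_inj; rewrite hr in e1; from e1.
have hd : d = s - b1 * ga by from e4.
have hp' : p' = a + c2 * ga by from f1.
have hr' : r' = t * ga by from f3.
have hs' : s' = d - b2 * ga.
  by apply: t_inj; rewrite hr' in f4; from f4.
split => //.
- by rewrite hp' ha; ring.
- by rewrite hs' hd; ring.
have hq' : t * q' = be + c2 * d - p' * b2 by from f2.
have hq : t * q = a * b1 + be - c1 * s by from e2.
rewrite mulrBr hq' hq hp' hd ha; ring.
Qed.

Definition vtx (j : 'I_10) (m : nat) : 'I_10 := inord ((j + 9 + m) %% 10).
Definition pos (j v : 'I_10) : nat := (v + 11 - j) %% 10.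

Lemma val_vtx (j : 'I_10) m : (vtx j m : nat) = ((j + 9 + m) %% 10)%N.
Proof. by rewrite inordK // ltn_mod. Qed.

Lemma vtx_eq (j : 'I_10) m1 m2 : ((j + 9 + m1) %% 10 = (j + 9 + m2) %% 10)%N -> vtx j m1 = vtx j m2.
Proof. by move=> h; apply: ord_inj; rewrite !val_vtx h. Qed.

Lemma prev_vtx (j : 'I_10) m : prev10 (vtx j m.+1) = vtx j m.
Proof.
apply: ord_inj; rewrite val_vtx /prev10 inordK ?ltn_mod // val_vtx.
have := ltn_ord j; lia.
Qed.

Lemma next_vtx (j : 'I_10) m : next10 (vtx j m) = vtx j m.+1.
Proof.
apply: ord_inj; rewrite val_vtx /next10 inordK ?ltn_mod // val_vtx.
have := ltn_ord j; lia.
Qed.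

Lemma vtx_mod (j : 'I_10) m : vtx j (m %% 10) = vtx j m.
Proof. apply: vtx_eq; lia. Qed.

Lemma vtx10 (j : 'I_10) m : vtx j (m + 10) = vtx j m.
Proof. apply: vtx_eq; lia. Qed.

Lemma odd_mod10 n : odd (n %% 10) = odd n.
Proof. by rewrite {2}(divn_eq n 10) oddD oddM andbF. Qed.

Lemma odd_vtx (j : 'I_10) m : odd j -> odd (vtx j m) = odd m.
Proof. by move=> oj; rewrite val_vtx odd_mod10 !oddD oj. Qed.

Lemma oidx_vtx (j : 'I_10) l : oidx j l = vtx j (2 * l).+1.
Proof.
apply: ord_inj; rewrite val_vtx /oidx inordK ?ltn_mod //; lia.
Qed.

Lemma j_vtx (j : 'I_10) : j = vtx j 1.
Proof. apply: ord_inj; rewrite val_vtx; have := ltn_ord j; lia. Qed.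

Lemma pos_lt (j v : 'I_10) : (pos j v < 10)%N.
Proof. by rewrite /pos ltn_mod. Qed.

Lemma vtx_pos (j v : 'I_10) : vtx j (pos j v) = v.
Proof.
apply: ord_inj; rewrite val_vtx /pos; have := ltn_ord j; have := ltn_ord v; lia.
Qed.

Lemma pos_vtx (j : 'I_10) m : (m < 10)%N -> pos j (vtx j m) = m.
Proof.
move=> hm; rewrite /pos val_vtx; have := ltn_ord j; lia.
Qed.

Lemma sum_vtx (j : 'I_10) (f : 'I_10 -> Z) :
  \sum_(k < 10) f k = \sum_(m < 10) f (vtx j m).
Proof.
apply: (reindex_inj (h := fun m : 'I_10 => vtx j m)).
move=> m1 m2 /(congr1 (pos j)); rewrite !pos_vtx ?ltn_ord //.
exact: ord_inj.
Qed.

Lemma sum10 (g : nat -> Z) :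
  \sum_(m < 10) g m = g 0%N + g 1%N + g 2%N + g 3%N + g 4%N + g 5%N + g 6%N + g 7%N + g 8%N + g 9%N.
Proof.
rewrite -(big_mkord xpredT g) !big_nat_recl // big_geq //.
rewrite addr0 !addrA. reflexivity.
Qed.

Definition evenM (p q r s : Z) : 'M[Z]_2 := mx2 p q (t * r) s.
Definition oddM (p q r s b1 c1 : Z) : 'M[Z]_2 :=
  mx2 (p + c1 * r) (t * q + c1 * s - (p + c1 * r) * b1) r (s - b1 * r).

Lemma bwd_odd p q r s b1 c1 :
  oddM p q r s b1 c1 *m mx2 t b1 0 1 = mx2 t c1 0 1 *m evenM p q r s.
Proof. rewrite /oddM /evenM !mx2_mul; congr mx2; ring. Qed.

Lemma bwd_even p q r s b1 b2 c1 c2 p' q' s' :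
  p' = p + (c1 + c2) * r -> s' = s - (b1 + b2) * r ->
  t * q' = t * q + ((c1 + c2) * s - (b1 + b2) * p - (b1 + b2) * (c1 + c2) * r) ->
  evenM p' q' r s' *m mx2 1 b2 0 t = mx2 1 c2 0 t *m oddM p q r s b1 c1.
Proof.
move=> -> -> hq; rewrite /oddM /evenM !mx2_mul; congr mx2; try ring.
have -> : q' * t = t * q' by ring.
rewrite hq; ring.
Qed.

Lemma mx2_inv (a b c d u : Z) : (a * d - b * c) * u = 1 ->
  exists psi : 'M[Z]_2, mx2 a b c d *m psi = 1%:M /\ psi *m mx2 a b c d = 1%:M.
Proof.
move=> h; exists (mx2 (d * u) (- b * u) (- c * u) (a * u)).
rewrite !mx2_mul mx2_1; split; congr mx2; try ring; from h.
Qed.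

Lemma oddM_det p q r s b1 c1 :
  (p + c1 * r) * (s - b1 * r) - (t * q + c1 * s - (p + c1 * r) * b1) * r
  = p * s - q * (t * r).
Proof. ring. Qed.

Section Construction.
Variables (bb cb : nat -> Z) (r P S : Z).

Definition Cs (f : nat -> Z) (k : nat) : Z := f (2 * k).+1 + f (2 * k).+2.

Fixpoint pk k := if k is k'.+1 then pk k' + Cs cb k' * r else P.
Fixpoint sk k := if k is k'.+1 then sk k' - Cs bb k' * r else S.
Definition Ek k := Cs cb k * sk k - Cs bb k * pk k - Cs bb k * Cs cb k * r.
Fixpoint qk k := if k is k'.+1 then qk k' + divt (Ek k') else 0.

Lemma pkS k : pk k.+1 = pk k + Cs cb k * r. Proof. reflexivity. Qed.
Lemma skS k : sk k.+1 = sk k - Cs bb k * r. Proof. reflexivity. Qed.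
Lemma qkS' k : qk k.+1 = qk k + divt (Ek k). Proof. reflexivity. Qed.

Definition ev k := evenM (pk k) (qk k) r (sk k).
Definition od k := oddM (pk k) (qk k) r (sk k) (bb (2 * k).+1) (cb (2 * k).+1).

Definition FF (m : nat) : 'M[Z]_2 :=
  match m with
  | 0 => ev 0 | 1 => od 0 | 2 => ev 1 | 3 => od 1 | 4 => ev 2
  | 5 => od 2 | 6 => ev 3 | 7 => od 3 | 8 => ev 4 | _ => od 4 end.

Definition XX (f : nat -> Z) (m : nat) : 'M[Z]_2 :=
  if odd m then mx2 t (f m) 0 1 else mx2 1 (f m) 0 t.

Hypothesis hE : forall k, (k < 5)%N -> ev0 (Ek k) = 0.
Hypothesis hB : Cs bb 0 + Cs bb 1 + Cs bb 2 + Cs bb 3 + Cs bb 4 = 0.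
Hypothesis hC : Cs cb 0 + Cs cb 1 + Cs cb 2 + Cs cb 3 + Cs cb 4 = 0.
Hypothesis hb10 : bb 10 = bb 0.
Hypothesis hc10 : cb 10 = cb 0.

Lemma qkS k : (k < 5)%N -> t * qk k.+1 = t * qk k + Ek k.
Proof. by move=> hk; rewrite qkS' mulrDr divtK // hE. Qed.

Lemma step_even k : (k < 5)%N ->
  ev k.+1 *m mx2 1 (bb (2 * k).+2) 0 t = mx2 1 (cb (2 * k).+2) 0 t *m od k.
Proof.
move=> hk; apply: bwd_even; [reflexivity | reflexivity |].
by rewrite qkS.
Qed.

Lemma step_odd k : od k *m mx2 t (bb (2 * k).+1) 0 1 = mx2 t (cb (2 * k).+1) 0 1 *m ev k.
Proof. exact: bwd_odd. Qed.

Lemma sumE : Ek 0 + Ek 1 + Ek 2 + Ek 3 + Ek 4 = 0.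
Proof.
have hB4 : Cs bb 4 = - (Cs bb 0 + Cs bb 1 + Cs bb 2 + Cs bb 3).
  by from hB.
have hC4 : Cs cb 4 = - (Cs cb 0 + Cs cb 1 + Cs cb 2 + Cs cb 3).
  by from hC.
rewrite /Ek !pkS !skS /= hB4 hC4; ring.
Qed.

Lemma ev5 : ev 5 = ev 0.
Proof.
have hB4 : Cs bb 4 = - (Cs bb 0 + Cs bb 1 + Cs bb 2 + Cs bb 3).
  by from hB.
have hC4 : Cs cb 4 = - (Cs cb 0 + Cs cb 1 + Cs cb 2 + Cs cb 3).
  by from hC.
rewrite /ev; congr evenM.
- rewrite !pkS /= hC4; ring.
- rewrite !qkS' /= add0r -!divtD sumE divt0; reflexivity.
- rewrite !skS /= hB4; ring.
Qed.

Lemma FF_rel m : (m < 10)%N ->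
  FF m *m XX bb m = XX cb m *m FF ((m + 9) %% 10).
Proof.
case: m => [_|]. 
  change (ev 0 *m mx2 1 (bb 0) 0 t = mx2 1 (cb 0) 0 t *m od 4).
  by rewrite -ev5 -hb10 -hc10; apply: step_even.
case=> [_|]. exact (step_odd 0).
case=> [_|]. exact (step_even 0 erefl).
case=> [_|]. exact (step_odd 1).
case=> [_|]. exact (step_even 1 erefl).
case=> [_|]. exact (step_odd 2).
case=> [_|]. exact (step_even 2 erefl).
case=> [_|]. exact (step_odd 3).
case=> [_|]. exact (step_even 3 erefl).
case=> [_|]. exact (step_odd 4).
by [].
Qed.

Lemma det_ev k : (k <= 5)%N -> pk k * sk k - qk k * (t * r) = P * S.
Proof.
elim: k => [_|k IH hk]; first by rewrite mul0r subr0.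
have e : qk k.+1 * (t * r) = (t * qk k.+1) * r by ring.
rewrite e qkS //; rewrite pkS skS -IH; last by lia.
rewrite /Ek; ring.
Qed.

Variable u : Z.
Hypothesis hu : P * S * u = 1.

Lemma ev_inv k : (k <= 5)%N ->
  exists psi : 'M[Z]_2, ev k *m psi = 1%:M /\ psi *m ev k = 1%:M.
Proof.
move=> hk; apply: (@mx2_inv _ _ _ _ u).
by rewrite -hu -(det_ev k hk); congr (_ * _); ring.
Qed.

Lemma od_inv k : (k <= 5)%N ->
  exists psi : 'M[Z]_2, od k *m psi = 1%:M /\ psi *m od k = 1%:M.
Proof.
move=> hk; apply: (@mx2_inv _ _ _ _ u).
by rewrite oddM_det -hu -(det_ev k hk).
Qed.

Lemma FF_inv m : exists psi : 'M[Z]_2, FF m *m psi = 1%:M /\ psi *m FF m = 1%:M.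
Proof.
do 9 (case: m => [|m]; first by apply: ev_inv || apply: od_inv).
exact: od_inv.
Qed.
End Construction.

Lemma eqg_from {R : comNzRingType} {x y u v : R} : u = v -> x - y = u - v -> x = y.
Proof. by move=> -> /eqP; rewrite subrr subr_eq0 => /eqP. Qed.
Lemma eqg_fromN {R : comNzRingType} {x y u v : R} : u = v -> x - y = v - u -> x = y.
Proof. by move=> -> /eqP; rewrite subrr subr_eq0 => /eqP. Qed.
Ltac fromg e := first [ refine (eqg_from e _); ring | refine (eqg_fromN e _); ring ].

Lemma alg_fwd (b1 b2 b3 g1 g2 g3 s p r : CC) :
  g1 * s - b1 * p - b1 * g1 * r = 0 ->
  g2 * (s - b1 * r) - b2 * (p + g1 * r) - b2 * g2 * r = 0 ->
  g3 * (s - (b1 + b2) * r) - b3 * (p + (g1 + g2) * r) - b3 * g3 * r = 0 ->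
  s != 0 ->
  b1 * g2 * b3 * (- (g1 + g2 + g3)) - g1 * b2 * g3 * (- (b1 + b2 + b3)) = 0.
Proof.
move=> e1 e2 e3 hs.
set c1 := b1 * g1.
set c2 := b1 * g2 + b2 * g1 + b2 * g2.
set c3 := (b1 + b2) * g3 + b3 * (g1 + g2) + b3 * g3.
have key : (b1 * g2 * b3 * (- (g1 + g2 + g3)) - g1 * b2 * g3 * (- (b1 + b2 + b3))) * s
  = (b2 * c3 - c2 * b3) * (g1 * s - b1 * p - b1 * g1 * r)
    - (b1 * c3 - c1 * b3) * (g2 * (s - b1 * r) - b2 * (p + g1 * r) - b2 * g2 * r)
    + (b1 * c2 - c1 * b2) * (g3 * (s - (b1 + b2) * r) - b3 * (p + (g1 + g2) * r) - b3 * g3 * r).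
  rewrite /c1 /c2 /c3; ring.
move: key; rewrite e1 e2 e3 !mulr0 subr0 addr0 => /eqP; rewrite mulf_eq0 (negbTE hs) orbF.
by move/eqP.
Qed.

Lemma XX_odd f m : odd m -> XX f m = mx2 t (f m) 0 1.
Proof. by rewrite /XX => ->. Qed.
Lemma XX_even f m : ~~ odd m -> XX f m = mx2 1 (f m) 0 t.
Proof. by rewrite /XX => /negbTE ->. Qed.
Lemma ev0t : ev0 t = 0.
Proof. by rewrite /t /ev0 /= mulr0n. Qed.

Lemma core_fwd (bb cb : nat -> Z) (Phi : nat -> 'M[Z]_2) :
  ev0 (Cs bb 0) = 0 -> ev0 (Cs cb 0) = 0 ->
  (Cs bb 0 + Cs bb 1 + Cs bb 2 + Cs bb 3 + Cs bb 4) = 0 ->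
  (Cs cb 0 + Cs cb 1 + Cs cb 2 + Cs cb 3 + Cs cb 4) = 0 ->
  (exists psi, Phi 0%N *m psi = 1%:M /\ psi *m Phi 0%N = 1%:M) ->
  (forall m, (m < 10)%N -> Phi m *m XX bb m = XX cb m *m Phi ((m + 9) %% 10)%N) ->
  ev0 (Cs bb 1 * Cs cb 2 * Cs bb 3 * Cs cb 4 - Cs cb 1 * Cs bb 2 * Cs cb 3 * Cs bb 4) = 0.
Proof.
move=> hb0 hc0 hB hC [psi [hpsi _]] hrel.
have r1 := hrel 1%N erefl; have r2 := hrel 2%N erefl; have r3 := hrel 3%N erefl.
have r4 := hrel 4%N erefl; have r5 := hrel 5%N erefl; have r6 := hrel 6%N erefl.
have r7 := hrel 7%N erefl; have r8 := hrel 8%N erefl.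
rewrite !XX_odd // in r1; rewrite !XX_odd // in r3; rewrite !XX_odd // in r5; rewrite !XX_odd // in r7.
rewrite !XX_even // in r2; rewrite !XX_even // in r4; rewrite !XX_even // in r6; rewrite !XX_even // in r8.
change ((1 + 9) %% 10)%N with 0%N in r1.
change ((2 + 9) %% 10)%N with 1%N in r2.
change ((3 + 9) %% 10)%N with 2%N in r3.
change ((4 + 9) %% 10)%N with 3%N in r4.
change ((5 + 9) %% 10)%N with 4%N in r5.
change ((6 + 9) %% 10)%N with 5%N in r6.
change ((7 + 9) %% 10)%N with 6%N in r7.
change ((8 + 9) %% 10)%N with 7%N in r8.
have [a1 a2 a3 a4 a5] := (fwd_step _ _ _ _ _ _ _ r1 r2).
have [b1 b2 b3 b4 b5] := (fwd_step _ _ _ _ _ _ _ r3 r4).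
have [c1 c2 c3 c4 c5] := (fwd_step _ _ _ _ _ _ _ r5 r6).
have [d1 d2 d3 d4 d5] := (fwd_step _ _ _ _ _ _ _ r7 r8).
change (cb 1%N + cb 2%N) with (Cs cb 0) in *; change (bb 1%N + bb 2%N) with (Cs bb 0) in *.
change (cb 3%N + cb 4%N) with (Cs cb 1) in *; change (bb 3%N + bb 4%N) with (Cs bb 1) in *.
change (cb 5%N + cb 6%N) with (Cs cb 2) in *; change (bb 5%N + bb 6%N) with (Cs bb 2) in *.
change (cb 7%N + cb 8%N) with (Cs cb 3) in *; change (bb 7%N + bb 8%N) with (Cs bb 3) in *.
have r13 : Phi 3%N 1 0 = Phi 1%N 1 0 by apply: t_inj; rewrite -b1 a2.
have r35 : Phi 5%N 1 0 = Phi 1%N 1 0 by apply: t_inj; rewrite -c1 b2 r13.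
have r57 : Phi 7%N 1 0 = Phi 1%N 1 0 by apply: t_inj; rewrite -d1 c2 r35.
rewrite r13 in b3 b4 b5; rewrite r35 in c3 c4 c5; rewrite r57 in d5.
rewrite a3 a4 in b3 b4 b5; rewrite b3 b4 in c3 c4 c5; rewrite c3 c4 in d5.
have hs0 : ev0 (Phi 0%N 1 1) != 0.
  rewrite (mx2_eta (Phi 0%N)) (mx2_eta psi) mx2_mul mx2_1 in hpsi.
  move: hpsi => /mx2_inj [_ _ _ h]; move: (congr1 ev0 h); rewrite a1 !(ev0D, ev0M) ev0t.
  rewrite mul0r mul0r add0r => h1; apply/eqP => h0; move: h1; rewrite h0 mul0r.
  move=> h2; have : (1 : CC) = 0 by rewrite [LHS](_ : _ = ev0 1) // -h2.
  by move/eqP; rewrite oner_eq0.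
have e1 := congr1 ev0 b5; have e2 := congr1 ev0 c5; have e3 := congr1 ev0 d5.
have eB := congr1 ev0 hB; have eC := congr1 ev0 hC.
rewrite ev0M ev0t mul0r in e1; rewrite ev0M ev0t mul0r in e2; rewrite ev0M ev0t mul0r in e3.
move: e1 e2 e3 eB eC hs0.
move: (Phi 0%N 0 0) (Phi 0%N 1 1) (Phi 1%N 1 0) => p0 s0 rho.
move: hb0 hc0.
move: (Cs bb 0) (Cs bb 1) (Cs bb 2) (Cs bb 3) (Cs bb 4) => B0 B1 B2 B3 B4.
move: (Cs cb 0) (Cs cb 1) (Cs cb 2) (Cs cb 3) (Cs cb 4) => C0 C1 C2 C3 C4.
move=> hb0 hc0 e1 e2 e3 eB eC hs0.
rewrite !(ev0D, ev0N, ev0M) in e1 e2 e3 eB eC *.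
rewrite ev00 in eB eC.
rewrite hb0 hc0 in e1 e2 e3 eB eC.
have hb4 : ev0 B4 = - (ev0 B1 + ev0 B2 + ev0 B3) by fromg eB.
have hc4 : ev0 C4 = - (ev0 C1 + ev0 C2 + ev0 C3) by fromg eC.
rewrite hb4 hc4.
apply: (alg_fwd (ev0 B1) (ev0 B2) (ev0 B3) (ev0 C1) (ev0 C2) (ev0 C3) (ev0 s0) (ev0 p0) (ev0 rho)).
- by fromg e1.
- by fromg e2.
- by fromg e3.
- exact: hs0.
Qed.

Lemma pk0 cb r P : pk cb r P 0 = P. Proof. reflexivity. Qed.
Lemma sk0 bb r S : sk bb r S 0 = S. Proof. reflexivity. Qed.

Lemma ev0_sum5 (x0 x1 x2 x3 x4 : Z) : ev0 x0 = 0 ->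
  x0 + x1 + x2 + x3 + x4 = 0 -> ev0 x4 = - (ev0 x1 + ev0 x2 + ev0 x3).
Proof.
move=> h0 /(congr1 ev0); rewrite !ev0D h0 ev00 => h; fromg h.
Qed.
Lemma ev0_sum5' (x0 x1 x2 x3 x4 : Z) : x0 + x1 + x2 + x3 + x4 = 0 ->
  ev0 x0 = 0 -> ev0 x1 = 0 -> ev0 x2 = 0 -> ev0 x3 = 0 -> ev0 x4 = 0.
Proof.
move=> /(congr1 ev0); rewrite !ev0D ev00 => h h0 h1 h2 h3.
by rewrite h0 h1 h2 h3 !add0r in h.
Qed.
Lemma ev0_expr (x1 x2 x3 x4 y1 y2 y3 y4 : Z) :
  ev0 (x1 * y2 * x3 * y4 - y1 * x2 * y3 * x4) =
  ev0 x1 * ev0 y2 * ev0 x3 * ev0 y4 - ev0 y1 * ev0 x2 * ev0 y3 * ev0 x4.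
Proof. by rewrite !(ev0D, ev0N, ev0M). Qed.
Lemma ev0_E (B C s p r : Z) :
  ev0 (C * s - B * p - B * C * r) = ev0 C * ev0 s - ev0 B * ev0 p - ev0 B * ev0 C * ev0 r.
Proof. by rewrite !(ev0D, ev0N, ev0M). Qed.
Lemma ev0_addM (x y z : Z) : ev0 (x + y * z) = ev0 x + ev0 y * ev0 z.
Proof. by rewrite !(ev0D, ev0N, ev0M). Qed.
Lemma ev0_subM (x y z : Z) : ev0 (x - y * z) = ev0 x - ev0 y * ev0 z.
Proof. by rewrite !(ev0D, ev0N, ev0M). Qed.

Lemma core_bwd (bb cb : nat -> Z) :
  bb 10%N = bb 0%N -> cb 10%N = cb 0%N ->
  ev0 (Cs bb 0) = 0 -> ev0 (Cs cb 0) = 0 ->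
  (Cs bb 0 + Cs bb 1 + Cs bb 2 + Cs bb 3 + Cs bb 4) = 0 ->
  (Cs cb 0 + Cs cb 1 + Cs cb 2 + Cs cb 3 + Cs cb 4) = 0 ->
  ev0 (Cs bb 1) != 0 -> ev0 (Cs cb 1) != 0 ->
  ev0 (Cs bb 2) != 0 -> ev0 (Cs cb 2) != 0 ->
  ev0 (Cs bb 1 + Cs bb 2) != 0 -> ev0 (Cs cb 1 + Cs cb 2) != 0 ->
  ev0 (Cs bb 1 * Cs cb 2 * Cs bb 3 * Cs cb 4 - Cs cb 1 * Cs bb 2 * Cs cb 3 * Cs bb 4) = 0 ->
  exists Phi : nat -> 'M[Z]_2,
    (forall m, exists psi, Phi m *m psi = 1%:M /\ psi *m Phi m = 1%:M) /\
    (forall m, (m < 10)%N -> Phi m *m XX bb m = XX cb m *m Phi ((m + 9) %% 10)%N).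
Proof.
move=> hb10 hc10 hb0 hc0 hB hC nb1 nc1 nb2 nc2 nb12 nc12 hX.
rewrite ev0D in nb12; rewrite ev0D in nc12.
have eB := ev0_sum5 _ _ _ _ _ hb0 hB; have eC := ev0_sum5 _ _ _ _ _ hc0 hC.
rewrite ev0_expr in hX.
set b1 := ev0 (Cs bb 1) in nb1 nb12 hX eB *.
set b2 := ev0 (Cs bb 2) in nb2 nb12 hX eB *.
set b3 := ev0 (Cs bb 3) in hX eB *.
set b4 := ev0 (Cs bb 4) in hX eB *.
set g1 := ev0 (Cs cb 1) in nc1 nc12 hX eC *.
set g2 := ev0 (Cs cb 2) in nc2 nc12 hX eC *.
set g3 := ev0 (Cs cb 3) in hX eC *.
set g4 := ev0 (Cs cb 4) in hX eC *.
have hb4 : b4 = - (b1 + b2 + b3) by exact eB.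
have hc4 : g4 = - (g1 + g2 + g3) by exact eC.
set sg := b1 * g2 * (b1 + b2).
set pi := g1 * b2 * (g1 + g2).
have nsg : sg != 0 by rewrite /sg !mulf_neq0.
have npi : pi != 0 by rewrite /pi !mulf_neq0.
set rho := cst (b1 * g2 - g1 * b2).
have hE : forall k, (k < 5)%N -> ev0 (Ek bb cb rho (cst pi) (cst sg) k) = 0.
  have hE0 : ev0 (Ek bb cb rho (cst pi) (cst sg) 0) = 0.
    rewrite /Ek pk0 sk0 ev0_E ?ev0_addM ?ev0_subM hb0 hc0; ring.
  have hE1 : ev0 (Ek bb cb rho (cst pi) (cst sg) 1) = 0.
    rewrite /Ek pkS skS pk0 sk0 ev0_E ?ev0_addM ?ev0_subM ?ev0_cst hb0 hc0 -/b1 -/g1.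
    rewrite /sg /pi; ring.
  have hE2 : ev0 (Ek bb cb rho (cst pi) (cst sg) 2) = 0.
    rewrite /Ek !pkS !skS pk0 sk0 ev0_E ?ev0_addM ?ev0_subM ?ev0_cst hb0 hc0 -/b1 -/g1 -/b2 -/g2.
    rewrite /sg /pi; ring.
  have hE3 : ev0 (Ek bb cb rho (cst pi) (cst sg) 3) = 0.
    rewrite /Ek !pkS !skS pk0 sk0 ev0_E ?ev0_addM ?ev0_subM ?ev0_cst hb0 hc0 -/b1 -/g1 -/b2 -/g2 -/b3 -/g3.
    rewrite hb4 hc4 in hX; rewrite /sg /pi; fromg hX.
  have hE4 : ev0 (Ek bb cb rho (cst pi) (cst sg) 4) = 0.
    exact: (ev0_sum5' _ _ _ _ _ (sumE bb cb rho (cst pi) (cst sg) hB hC) hE0 hE1 hE2 hE3).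
  case=> [_|[_|[_|[_|[_|k hk]]]]]; [exact: hE0 | exact: hE1 | exact: hE2 | exact: hE3 | exact: hE4 |].
  exfalso; lia.
exists (FF bb cb rho (cst pi) (cst sg)); split.
  apply: (FF_inv _ _ _ _ _ hE (cst ((pi * sg)^-1))).
  rewrite !cst_mul mulfV ?mulf_neq0 //; exact cst1.
exact: FF_rel.
Qed.

Lemma prev_vtx' (j : 'I_10) m : prev10 (vtx j m) = vtx j ((m + 9) %% 10).
Proof.
apply: ord_inj; rewrite val_vtx /prev10 inordK ?ltn_mod // val_vtx.
have := ltn_ord j; lia.
Qed.

Lemma pos_prev (j v : 'I_10) : pos j (prev10 v) = ((pos j v + 9) %% 10)%N.
Proof.
rewrite /pos /prev10 inordK ?ltn_mod //; have := ltn_ord j; have := ltn_ord v; lia.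
Qed.

Lemma y_odd (P0 P1 : 'M[Z]_2) (b c : Z) :
  P1 *m mx2 t b 0 1 = mx2 t c 0 1 *m P0 ->
  P0 *m mx2 1 (- b) 0 t = mx2 1 (- c) 0 t *m P1.
Proof.
rewrite (mx2_eta P0) (mx2_eta P1) !mx2_mul.
move: (P0 0 0) (P0 0 1) (P0 1 0) (P0 1 1) => p q r s.
move: (P1 0 0) (P1 0 1) (P1 1 0) (P1 1 1) => a be g d.
move=> /mx2_inj [e1 e2 e3 e4].
have hr : r = g * t by from e3.
have hs : s = g * b + d by from e4.
have ha : a = p + c * g by apply: t_inj; rewrite hr in e1; from e1.
have hq : q * t = a * b + be - c * s by from e2.
subst r s a; congr mx2; try ring.
rewrite hq; ring.
Qed.

Lemma y_even (P0 P1 : 'M[Z]_2) (b c : Z) :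
  P1 *m mx2 1 b 0 t = mx2 1 c 0 t *m P0 ->
  P0 *m mx2 t (- b) 0 1 = mx2 t (- c) 0 1 *m P1.
Proof.
rewrite (mx2_eta P0) (mx2_eta P1) !mx2_mul.
move: (P0 0 0) (P0 0 1) (P0 1 0) (P0 1 1) => p q r s.
move: (P1 0 0) (P1 0 1) (P1 1 0) (P1 1 1) => a be g d.
move=> /mx2_inj [e1 e2 e3 e4].
have ha : a = p + c * r by from e1.
have hg : g = t * r by from e3.
have hd : d = s - r * b by apply: t_inj; rewrite hg in e4; from e4.
have hq : q = a * b + be * t - c * s by from e2.
subst a g d q; congr mx2; ring.
Qed.

Lemma y_from_x (f g : 'I_10 -> Z) (v : 'I_10) (P0 P1 : 'M[Z]_2) :
  P1 *m xmat f v = xmat g v *m P0 -> P0 *m ymat f v = ymat g v *m P1.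
Proof. rewrite /xmat /ymat; case: (odd v); [exact: y_odd | exact: y_even]. Qed.

Lemma xmat_XX (j : 'I_10) (f : 'I_10 -> Z) (m : nat) : odd j ->
  xmat f (vtx j m) = XX (fun k => f (vtx j k)) m.
Proof. by move=> oj; rewrite /xmat /XX odd_vtx. Qed.

Lemma Miso_pos (b c : 'I_10 -> Z) (j : 'I_10) : odd j ->
  Miso b c <->
  exists Phi : nat -> 'M[Z]_2,
    (forall m, exists psi, Phi m *m psi = 1%:M /\ psi *m Phi m = 1%:M) /\
    (forall m, (m < 10)%N ->
       Phi m *m XX (fun k => b (vtx j k)) m = XX (fun k => c (vtx j k)) m *m Phi ((m + 9) %% 10)%N).
Proof.
move=> oj; split.
  move=> [phi [hinv [hx _]]]; exists (fun m => phi (vtx j m)); split.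
    by move=> m; apply: hinv.
  move=> m _; have := hx (vtx j m); rewrite prev_vtx' !xmat_XX //.
move=> [Phi [hinv hrel]].
have hx : forall v, Phi (pos j v) *m xmat b v = xmat c v *m Phi (pos j (prev10 v)).
  move=> v; have := hrel (pos j v) (pos_lt j v).
  by rewrite -!xmat_XX // !vtx_pos pos_prev.
exists (fun v => Phi (pos j v)); split; first by move=> v; apply: hinv.
split; first exact: hx.
by move=> v; apply: y_from_x; apply: hx.
Qed.

Lemma BsumE (j : 'I_10) (f : 'I_10 -> Z) l :
  Bsum f (oidx j l) = Cs (fun k => f (vtx j k)) l.
Proof. rewrite /Bsum oidx_vtx next_vtx; reflexivity. Qed.

Lemma BsumE0 (j : 'I_10) (f : 'I_10 -> Z) :
  Bsum f j = Cs (fun k => f (vtx j k)) 0.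
Proof.
have -> : Bsum f j = Bsum f (vtx j 1) by rewrite -j_vtx.
rewrite /Bsum next_vtx; reflexivity.
Qed.

Lemma sumCs (j : 'I_10) (f : 'I_10 -> Z) : \sum_(k < 10) f k = 0 ->
  let ff := fun k => f (vtx j k) in
  Cs ff 0 + Cs ff 1 + Cs ff 2 + Cs ff 3 + Cs ff 4 = 0.
Proof.
rewrite (sum_vtx j) => h ff.
have h10 : ff 10%N = ff 0%N by rewrite /ff -(vtx10 j 0).
have e := sum10 ff.
have -> : Cs ff 0 + Cs ff 1 + Cs ff 2 + Cs ff 3 + Cs ff 4 =
  ff 1%N + ff 2%N + (ff 3%N + ff 4%N) + (ff 5%N + ff 6%N) + (ff 7%N + ff 8%N) + (ff 9%N + ff 10%N).
  reflexivity.
rewrite -h; have -> : \sum_(m < 10) f (vtx j m) = \sum_(m < 10) ff m by [].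
rewrite e h10; ring.
Qed.

Theorem theorem2p5 (b c : 'I_10 -> Z) (j : 'I_10) :
  \sum_(k < 10) b k = 0 ->
  \sum_(k < 10) c k = 0 ->
  odd j ->
  Zdvd t (Bsum b j) ->
  Zdvd t (Bsum c j) ->
  (forall l : 'I_4,
      ~ Zdvd t (Bsum b (oidx j l.+1)) /\ ~ Zdvd t (Bsum c (oidx j l.+1))) ->
  (forall l : 'I_4,
      ~ Zdvd t (Bsum b (oidx j l.+1) + Bsum b (oidx j ((l.+1 %% 4).+1)))
   /\ ~ Zdvd t (Bsum c (oidx j l.+1) + Bsum c (oidx j ((l.+1 %% 4).+1)))) ->
  (Miso b c <->
   Zdvd t (Bsum b (oidx j 1) * Bsum c (oidx j 2) * Bsum b (oidx j 3) * Bsum c (oidx j 4)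
         - Bsum c (oidx j 1) * Bsum b (oidx j 2) * Bsum c (oidx j 3) * Bsum b (oidx j 4))).
Proof.
move=> hb hc oj hBj hCj hnd hnd2.
apply: (iff_trans (Miso_pos b c j oj)).
apply: (iff_trans _ (iff_sym (Zdvd_ev0 _))).
rewrite !BsumE.
have hB := sumCs j b hb; have hC := sumCs j c hc.
move: hBj hCj; rewrite !BsumE0 => /Zdvd_ev0 hb0 /Zdvd_ev0 hc0.
have [nb1 nc1] := hnd ord0.
have [nb2 nc2] := hnd (@Ordinal 4 1 isT).
have [nb12 nc12] := hnd2 ord0.
rewrite !BsumE in nb1 nc1 nb2 nc2 nb12 nc12.
set bb := fun k => b (vtx j k); set cb := fun k => c (vtx j k).
split.
  move=> [Phi [hinv hrel]].
  exact: (core_fwd _ _ _ hb0 hc0 hB hC (hinv 0%N) hrel).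
move=> hX.
apply: core_bwd => //.
- by rewrite /bb -(vtx10 j 0).
- by rewrite /cb -(vtx10 j 0).
- by apply/eqP => h; apply: nb1; apply/Zdvd_ev0.
- by apply/eqP => h; apply: nc1; apply/Zdvd_ev0.
- by apply/eqP => h; apply: nb2; apply/Zdvd_ev0.
- by apply/eqP => h; apply: nc2; apply/Zdvd_ev0.
- by apply/eqP => h; apply: nb12; apply/Zdvd_ev0.
- by apply/eqP => h; apply: nc12; apply/Zdvd_ev0.
Qed.
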